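(* Let $A\in\mathcal{C}_n$ and let $w\in\mathbb{R}^n$ be nonzero. Then $A$ is irreducible with respect to $ww^T$ if and only if there exists a zero $u$ of $A$ with $w^Tu\ne0$.
   Context: $\mathcal{C}_n$ denotes the cone of copositive matrices: real symmetric $n\times n$ matrices $A$ with $x^TAx\ge 0$ for all $x\in\mathbb{R}^n_+$. For a matrix $M$, $A$ is irreducible with respect to $M$ if there does not exist $\gamma>0$ with $A-\gamma M\in\mathcal{C}_n$ (for $M\ne0$). A zero of $A$ is a nonzero $u\in\mathbb{R}^n_+$ with $u^TAu=0$. *)

(* Defs.v *)
(* real numbers are Stdlib's R.
   Vectors in R^n are functions nat -> R (only indices 0..n-1 matter),
   n x n matrices are functions nat -> nat -> R. *)
From Stdlib Require Import Reals.
Open Scope R_scope.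

Fixpoint rsum (n : nat) (f : nat -> R) : R :=
  match n with
  | O => 0
  | S k => rsum k f + f k
  end.

Definition quad (n : nat) (A : nat -> nat -> R) (x : nat -> R) : R :=
  rsum n (fun i => rsum n (fun j => x i * A i j * x j)).

Definition dot (n : nat) (w u : nat -> R) : R := rsum n (fun i => w i * u i).

Definition symmetric (n : nat) (A : nat -> nat -> R) : Prop :=
  forall i j, (i < n)%nat -> (j < n)%nat -> A i j = A j i.

Definition nonneg_vec (n : nat) (x : nat -> R) : Prop :=
  forall i, (i < n)%nat -> 0 <= x i.

Definition nonzero_vec (n : nat) (x : nat -> R) : Prop :=
  exists i, (i < n)%nat /\ x i <> 0.

Definition copositive (n : nat) (A : nat -> nat -> R) : Prop :=
  symmetric n A /\ forall x, nonneg_vec n x -> 0 <= quad n A x.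

Definition outer (w : nat -> R) : nat -> nat -> R := fun i j => w i * w j.

Definition mat_sub_scal (A : nat -> nat -> R) (gamma : R) (M : nat -> nat -> R)
  : nat -> nat -> R := fun i j => A i j - gamma * M i j.

Definition irreducible_wrt (n : nat) (A M : nat -> nat -> R) : Prop :=
  ~ (exists gamma, 0 < gamma /\ copositive n (mat_sub_scal A gamma M)).

Definition is_zero_of (n : nat) (A : nat -> nat -> R) (u : nat -> R) : Prop :=
  nonneg_vec n u /\ nonzero_vec n u /\ quad n A u = 0.

(* Main.v *)
Require Import Defs.
From Stdlib Require Import Reals Lra Lia Classical.
Open Scope R_scope.

Definition Pset n (S : nat -> bool) (x : nat -> R) : Prop :=
  (forall i, (i < n)%nat -> 0 <= x i <= 1) /\
  (forall i, (i < n)%nat -> S i = false -> x i = 0) /\ rsum n x = 1.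

Module MC.
From mathcomp Require Import all_boot all_order all_algebra.
From mathcomp Require Import all_classical all_reals all_analysis.
From mathcomp Require Import Rstruct Rstruct_topology.
Import Order.TTheory GRing.Theory Num.Theory.
Local Open Scope classical_set_scope.
Local Open Scope ring_scope.

Lemma rsum_big (f : nat -> R) n : rsum n f = \sum_(i < n) f i.
Proof.
elim: n => [|k IH] /=; first by rewrite big_ord0.
by rewrite big_ord_recr /= IH.
Qed.


Lemma compact_bound n (A : nat -> nat -> R) (S : nat -> bool) :
  (forall x, Pset n S x -> Rlt 0 (quad n A x)) ->
  exists c, Rlt 0 c /\ forall x, Pset n S x -> Rle c (quad n A x).
Proof.
move=> Hpos'.
have Hpos : forall x, Pset n S x -> 0 < quad n A x by move=> x /Hpos' /RltP.
pose Q (v : 'rV[R]_n) := \sum_(i < n) \sum_(j < n) v ord0 i * A i j * v ord0 j.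
pose xv (v : 'rV[R]_n) : nat -> R :=
  fun k => match (insub k : option 'I_n) with Some i => v ord0 i | None => 0 end.
have xvE : forall v (i : 'I_n), xv v i = v ord0 i.
  by move=> v i; rewrite /xv valK.
have QE : forall v, quad n A (xv v) = Q v.
  move=> v; rewrite /quad rsum_big; apply: eq_bigr => i _.
  rewrite rsum_big; apply: eq_bigr => j _; by rewrite !xvE.
have QrowE : forall x, Q (\row_(i < n) x (i : nat)) = quad n A x.
  move=> x; rewrite /quad rsum_big; apply: eq_bigr => i _.
  rewrite rsum_big; apply: eq_bigr => j _; by rewrite !mxE.
pose Ci (i : 'I_n) : set R := if S i then `[0, 1]%classic else [set 0].
pose K := [set v : 'rV[R]_n | forall i, Ci i (v ord0 i)] `&`
          [set v : 'rV[R]_n | \sum_(i < n) v ord0 i = 1].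
have cK : compact K.
  apply: compact_closedI.
    apply: rV_compact => i; rewrite /Ci; case: (S i).
      exact: segment_compact.
    exact: compact_set1.
  have -> : [set v : 'rV[R]_n | \sum_(i < n) v ord0 i = 1] =
     (fun v : 'rV[R]_n => \sum_(i < n) v ord0 i) @^-1` [set x | x = 1] by [].
  apply: preimage_closed; last exact: closed_eq.
  move=> v _.
  have := @continuous_big R^o 'I_n +%R 0 xpredT add_continuous 'rV[R]_n (index_enum 'I_n) (fun i v => v ord0 i).
  by apply => // i _; exact: coord_continuous.
have cQ : continuous Q.
  apply: (@continuous_big R^o 'I_n +%R 0 xpredT add_continuous 'rV[R]_n (index_enum 'I_n)) => i _.
  apply: (@continuous_big R^o 'I_n +%R 0 xpredT add_continuous 'rV[R]_n (index_enum 'I_n)) => j _.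
  move=> v.
  apply: (@continuousM R 'rV[R]_n (fun v => v ord0 i * A i j) (fun v => v ord0 j)); last exact: coord_continuous.
  apply: (@continuousM R 'rV[R]_n (fun v => v ord0 i) (fun v => A i j)); first exact: coord_continuous.
  exact: cst_continuous.
have inK : forall x, Pset n S x -> K (\row_(i < n) x (i : nat)).
  move=> x [H1 [H2 H3]]; split.
    move=> i; rewrite /Ci mxE; case HS: (S i).
      have [/RleP a /RleP b] := H1 i (elimT ssrnat.ltP (ltn_ord i)); by rewrite /= in_itv /= a b.
    by rewrite /= (H2 i (elimT ssrnat.ltP (ltn_ord i)) HS).
  rewrite /= (_ : 1 = rsum n x) // rsum_big; apply: eq_bigr => i _; by rewrite mxE.
have [[v0 Kv0]|K0] := pselect (K !=set0); last first.
  exists 1%R; split; first exact: Rlt_0_1. move=> x Px; exfalso; apply: K0; exists (\row_(i < n) x (i : nat)).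
  exact: inK.
have [c cK' cmin] := EVT_min_rV (ex_intro _ v0 Kv0) cK (continuous_subspaceT cQ).
have Kc : K c by move: cK'; rewrite inE.
have Pc : Pset n S (xv c).
  case: Kc => Kc1 Kc2; split; [|split].
  - move=> k /ssrnat.ltP kn; rewrite -[k]/(nat_of_ord (Ordinal kn)) xvE.
    have := Kc1 (Ordinal kn); rewrite /Ci; case: (S _) => /=.
      by rewrite in_itv /= => /andP[/RleP a /RleP b].
    move=> ->; split; apply/RleP; [exact: lexx | exact: ler01].
  - move=> k /ssrnat.ltP kn Sk; rewrite -[k]/(nat_of_ord (Ordinal kn)) xvE.
    by have := Kc1 (Ordinal kn); rewrite /Ci /= Sk.
  - rewrite rsum_big (_ : 1%coqR = \sum_(i < n) c ord0 i) //; apply: eq_bigr => i _; by rewrite xvE.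
exists (Q c); split; first by apply/RltP; rewrite -QE; exact: Hpos.
move=> x Px; apply/RleP; rewrite -QrowE; apply: cmin; rewrite inE; exact: inK.
Qed.
End MC.

Lemma rsum_ext n f g : (forall i, (i < n)%nat -> f i = g i) -> rsum n f = rsum n g.
Proof.
  induction n; simpl; intros H; auto.
  rewrite IHn by (intros; apply H; lia). rewrite H by lia. reflexivity.
Qed.

Lemma rsum_lin4 n (a b c d : nat -> R) (s1 s2 s3 : R) :
  rsum n (fun j => a j + s1 * b j + s2 * c j + s3 * d j)
  = rsum n a + s1 * rsum n b + s2 * rsum n c + s3 * rsum n d.
Proof. induction n; simpl. ring. rewrite IHn. ring. Qed.

Lemma rsum_lin2 n (a b : nat -> R) (s : R) :
  rsum n (fun j => a j + s * b j) = rsum n a + s * rsum n b.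
Proof. induction n; simpl. ring. rewrite IHn. ring. Qed.

Lemma rsum_plus n (a b : nat -> R) :
  rsum n (fun j => a j + b j) = rsum n a + rsum n b.
Proof. induction n; simpl. ring. rewrite IHn. ring. Qed.

Lemma rsum_minus n (a b : nat -> R) :
  rsum n (fun j => a j - b j) = rsum n a - rsum n b.
Proof. induction n; simpl. ring. rewrite IHn. ring. Qed.

Lemma rsum_scal n c f : rsum n (fun i => c * f i) = c * rsum n f.
Proof. induction n; simpl. ring. rewrite IHn. ring. Qed.

Lemma rsum_scalr n c f : rsum n (fun i => f i * c) = rsum n f * c.
Proof. induction n; simpl. ring. rewrite IHn. ring. Qed.

Lemma rsum_zero n f : (forall i, (i < n)%nat -> f i = 0) -> rsum n f = 0.
Proof.
  induction n; simpl; intros H; auto.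
  rewrite IHn by (intros; apply H; lia). rewrite H by lia. ring.
Qed.

Lemma rsum_nonneg n f : (forall i, (i < n)%nat -> 0 <= f i) -> 0 <= rsum n f.
Proof.
  induction n; simpl; intros H. lra.
  assert (0 <= rsum n f) by (apply IHn; intros; apply H; lia).
  assert (0 <= f n) by (apply H; lia). lra.
Qed.

Lemma rsum_le n f g : (forall i, (i < n)%nat -> f i <= g i) -> rsum n f <= rsum n g.
Proof.
  induction n; simpl; intros H. lra.
  assert (rsum n f <= rsum n g) by (apply IHn; intros; apply H; lia).
  assert (f n <= g n) by (apply H; lia). lra.
Qed.

Lemma rsum_swap n m f :
  rsum n (fun i => rsum m (fun j => f i j)) = rsum m (fun j => rsum n (fun i => f i j)).
Proof.
  induction n; simpl.
  - symmetry; apply rsum_zero; auto.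
  - rewrite IHn. rewrite <- rsum_plus. reflexivity.
Qed.

Lemma rsum_mul n m f g :
  rsum n f * rsum m g = rsum n (fun i => rsum m (fun j => f i * g j)).
Proof.
  rewrite <- rsum_scalr. apply rsum_ext; intros. rewrite <- rsum_scal.
  apply rsum_ext; intros; ring.
Qed.

Definition delta (j k : nat) : R := if Nat.eqb k j then 1 else 0.

Lemma rsum_delta_gen n f j :
  rsum n (fun k => f k * delta j k) = if Nat.ltb j n then f j else 0.
Proof.
  induction n; simpl. reflexivity.
  rewrite IHn. unfold delta.
  destruct (Nat.eqb n j) eqn:E.
  - apply Nat.eqb_eq in E; subst.
    replace (Nat.ltb j j) with false by (symmetry; apply Nat.ltb_ge; lia).
    replace (Nat.ltb j (S j)) with true by (symmetry; apply Nat.ltb_lt; lia). ring.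
  - apply Nat.eqb_neq in E.
    destruct (Nat.ltb j n) eqn:E1.
    + apply Nat.ltb_lt in E1.
      replace (Nat.ltb j (S n)) with true by (symmetry; apply Nat.ltb_lt; lia). ring.
    + apply Nat.ltb_ge in E1.
      replace (Nat.ltb j (S n)) with false by (symmetry; apply Nat.ltb_ge; lia). ring.
Qed.

Lemma rsum_delta n f j : (j < n)%nat -> rsum n (fun k => f k * delta j k) = f j.
Proof.
  intros H. rewrite rsum_delta_gen.
  replace (Nat.ltb j n) with true by (symmetry; apply Nat.ltb_lt; lia). reflexivity.
Qed.

Lemma rsum_ge_term n f i : (forall k, (k < n)%nat -> 0 <= f k) -> (i < n)%nat -> f i <= rsum n f.
Proof.
  induction n; simpl; intros H Hi. lia.
  assert (0 <= rsum n f) by (apply rsum_nonneg; intros; apply H; lia).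
  destruct (Nat.eq_dec i n).
  - subst. lra.
  - assert (f i <= rsum n f) by (apply IHn; [intros; apply H; lia| lia]).
    assert (0 <= f n) by (apply H; lia). lra.
Qed.

Lemma rsum_abs n f : Rabs (rsum n f) <= rsum n (fun i => Rabs (f i)).
Proof.
  induction n; simpl. rewrite Rabs_R0; lra.
  eapply Rle_trans. apply Rabs_triang. lra.
Qed.

Lemma rsum_nz n f : rsum n f <> 0 -> exists i, (i < n)%nat /\ f i <> 0.
Proof.
  intros H. apply NNPP; intro H'. apply H. apply rsum_zero. intros i Hi.
  apply NNPP; intro H2. apply H'. exists i; auto.
Qed.

Definition bil n (A : nat -> nat -> R) (x y : nat -> R) : R :=
  rsum n (fun i => rsum n (fun j => x i * A i j * y j)).

Lemma bil_sym n A x y : symmetric n A -> bil n A x y = bil n A y x.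
Proof.
  intros HS. unfold bil. rewrite rsum_swap. apply rsum_ext; intros i Hi.
  apply rsum_ext; intros j Hj. rewrite (HS j i) by auto. ring.
Qed.

Lemma quad_expand n A x v s : symmetric n A ->
  quad n A (fun k => x k + s * v k) = quad n A x + 2 * s * bil n A x v + s^2 * quad n A v.
Proof.
  intros HS. unfold quad.
  transitivity (rsum n (fun i => rsum n (fun j => x i * A i j * x j))
     + s * bil n A x v + s * bil n A v x + s^2 * rsum n (fun i => rsum n (fun j => v i * A i j * v j))).
  - unfold bil. rewrite <- rsum_lin4. apply rsum_ext; intros i Hi.
    rewrite <- rsum_lin4. apply rsum_ext; intros j Hj. ring.
  - rewrite (bil_sym n A v x HS). ring.
Qed.

Lemma quad_scal n A x c : quad n A (fun k => c * x k) = c^2 * quad n A x.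
Proof.
  unfold quad. rewrite <- rsum_scal. apply rsum_ext; intros.
  rewrite <- rsum_scal. apply rsum_ext; intros. ring.
Qed.

Lemma dot_lin n w y u s : dot n w (fun k => y k + s * u k) = dot n w y + s * dot n w u.
Proof.
  unfold dot. rewrite <- rsum_lin2. apply rsum_ext; intros; ring.
Qed.

Lemma quad_sub n A w g x :
  quad n (mat_sub_scal A g (outer w)) x = quad n A x - g * (dot n w x)^2.
Proof.
  unfold quad, dot, mat_sub_scal, outer.
  rewrite <- Rsqr_pow2. unfold Rsqr. rewrite rsum_mul.
  rewrite <- rsum_scal. rewrite <- rsum_minus.
  apply rsum_ext; intros i Hi. rewrite <- rsum_scal, <- rsum_minus.
  apply rsum_ext; intros; ring.
Qed.

Definition col n (A : nat -> nat -> R) (u : nat -> R) j := rsum n (fun i => u i * A i j).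

Lemma bil_delta n A u j : (j < n)%nat -> bil n A u (delta j) = col n A u j.
Proof.
  intros Hj. unfold bil, col. apply rsum_ext; intros i Hi.
  apply (rsum_delta n (fun k => u i * A i k)). auto.
Qed.

Lemma quad_delta n A j : (j < n)%nat -> quad n A (delta j) = A j j.
Proof.
  intros Hj. unfold quad.
  transitivity (rsum n (fun i => A i j * delta j i)).
  - apply rsum_ext; intros i Hi.
    rewrite (rsum_delta n (fun k => delta j i * A i k)) by auto. ring.
  - apply (rsum_delta n (fun i => A i j)). auto.
Qed.

Lemma col_nonneg n A u j : copositive n A -> nonneg_vec n u -> quad n A u = 0 ->
  (j < n)%nat -> 0 <= col n A u j.
Proof.
  intros [HS HC] Hu Hq Hj.
  apply Rnot_lt_le; intro Hb.
  set (b := col n A u j) in *.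
  set (a := A j j).
  set (t := Rabs a + 1).
  assert (Ht : 0 < t) by (unfold t; pose proof (Rabs_pos a); lra).
  set (s := - b / t).
  assert (Hs : 0 < s) by (unfold s; apply Rdiv_lt_0_compat; lra).
  assert (Hst : s * t = - b) by (unfold s; field; lra).
  assert (Hnn : nonneg_vec n (fun k => u k + s * delta j k)).
  { intros k Hk. pose proof (Hu k Hk). unfold delta. destruct (Nat.eqb k j); lra. }
  pose proof (HC _ Hnn) as H.
  rewrite quad_expand in H by auto.
  rewrite bil_delta, quad_delta in H by auto.
  fold b a in H. rewrite Hq in H.
  assert (Ha : a <= Rabs a) by apply Rle_abs.
  assert (s * a <= s * Rabs a) by (apply Rmult_le_compat_l; lra).
  assert (s * Rabs a = -b - s) by (unfold t in Hst; lra).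
  nra.
Qed.

Lemma bil_zero_nonneg n A u y : copositive n A -> nonneg_vec n u -> quad n A u = 0 ->
  nonneg_vec n y -> 0 <= bil n A u y.
Proof.
  intros HA Hu Hq Hy.
  assert (E : bil n A u y = rsum n (fun j => col n A u j * y j)).
  { unfold bil, col. rewrite rsum_swap. apply rsum_ext; intros j Hj.
    rewrite <- rsum_scalr. apply rsum_ext; intros; ring. }
  rewrite E. apply rsum_nonneg; intros j Hj.
  apply Rmult_le_pos. apply col_nonneg; auto. apply Hy; auto.
Qed.


Fixpoint cnt (n : nat) (P : nat -> bool) : nat :=
  match n with O => O | S k => (cnt k P + (if P k then 1 else 0))%nat end.

Definition rm (P : nat -> bool) (i : nat) : nat -> bool :=
  fun k => andb (P k) (negb (Nat.eqb k i)).

Lemma cnt_rm n P i :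
  (cnt n (rm P i) + (if andb (Nat.ltb i n) (P i) then 1 else 0) = cnt n P)%nat.
Proof.
  induction n; simpl. destruct (P i); simpl; reflexivity.
  unfold rm at 2. destruct (Nat.eq_dec n i).
  - subst. rewrite Nat.eqb_refl.
    replace (Nat.ltb i (S i)) with true by (symmetry; apply Nat.ltb_lt; lia).
    replace (Nat.ltb i i) with false in IHn by (symmetry; apply Nat.ltb_ge; lia).
    simpl in IHn. destruct (P i); simpl; lia.
  - replace (Nat.eqb n i) with false by (symmetry; apply Nat.eqb_neq; auto).
    replace (Nat.ltb i (S n)) with (Nat.ltb i n).
    + destruct (P n); simpl; lia.
    + destruct (Nat.ltb i n) eqn:E; symmetry.
      * apply Nat.ltb_lt in E. apply Nat.ltb_lt. lia.
      * apply Nat.ltb_ge in E. apply Nat.ltb_ge. lia.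
Qed.

Lemma cnt_zero n P : cnt n P = 0%nat -> forall i, (i < n)%nat -> P i = false.
Proof.
  induction n; simpl; intros H i Hi. lia.
  destruct (Nat.eq_dec i n).
  - subst. destruct (P n); auto. lia.
  - apply IHn; lia.
Qed.

Lemma finmin (Q : nat -> R -> Prop) k :
  (forall i, (i < k)%nat -> exists g, 0 < g /\ Q i g) ->
  (forall i g g', 0 < g' -> g' <= g -> Q i g -> Q i g') ->
  exists g, 0 < g /\ forall i, (i < k)%nat -> Q i g.
Proof.
  intros H Hd. induction k.
  - exists 1. split. lra. intros; lia.
  - destruct IHk as [g1 [Hg1 H1]]. intros; apply H; lia.
    destruct (H k) as [g2 [Hg2 H2]]. lia.
    exists (Rmin g1 g2). split. apply Rmin_pos; auto.
    intros i Hi. destruct (Nat.eq_dec i k).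
    + subst. apply (Hd k g2). apply Rmin_pos; auto. apply Rmin_r. auto.
    + apply (Hd i g1). apply Rmin_pos; auto. apply Rmin_l. apply H1. lia.
Qed.

Lemma argmin n (u y : nat -> R) : (exists i, (i < n)%nat /\ 0 < u i) ->
  exists i0, (i0 < n)%nat /\ 0 < u i0 /\
    forall i, (i < n)%nat -> 0 < u i -> y i0 / u i0 <= y i / u i.
Proof.
  induction n; intros [i [Hi Hu]]. lia.
  destruct (classic (exists i, (i < n)%nat /\ 0 < u i)) as [Hex|Hno].
  - destruct (IHn Hex) as [i0 [Hi0 [Hu0 Hm]]].
    destruct (Rlt_dec 0 (u n)) as [Hun|Hun].
    + destruct (Rle_dec (y i0 / u i0) (y n / u n)).
      * exists i0. split. lia. split. auto. intros k Hk Huk.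
        destruct (Nat.eq_dec k n). subst; auto. apply Hm; auto; lia.
      * exists n. split. lia. split. auto. intros k Hk Huk.
        destruct (Nat.eq_dec k n). subst; lra.
        assert (y i0 / u i0 <= y k / u k) by (apply Hm; auto; lia). lra.
    + exists i0. split. lia. split. auto. intros k Hk Huk.
      destruct (Nat.eq_dec k n). subst; lra. apply Hm; auto; lia.
  - assert (i = n).
    { destruct (Nat.eq_dec i n); auto. exfalso. apply Hno. exists i. split; auto. lia. }
    subst. exists n. split. lia. split. auto. intros k Hk Huk.
    destruct (Nat.eq_dec k n). subst; lra.
    exfalso. apply Hno. exists k. split; auto. lia.
Qed.

Definition supp n (P : nat -> bool) (x : nat -> R) : Prop :=
  forall i, (i < n)%nat -> P i = false -> x i = 0.

Definition Kprop n A w P : Prop :=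
  exists g, 0 < g /\ forall x, nonneg_vec n x -> supp n P x ->
    g * (dot n w x)^2 <= quad n A x.

Lemma dot_bound n w x : nonneg_vec n x ->
  (dot n w x)^2 <= (rsum n (fun i => Rabs (w i)) * rsum n x)^2.
Proof.
  intros Hx.
  assert (H1 : Rabs (dot n w x) <= rsum n (fun i => Rabs (w i)) * rsum n x).
  { eapply Rle_trans. apply rsum_abs. rewrite <- rsum_scalr. apply rsum_le.
    intros i Hi. rewrite Rabs_mult. rewrite (Rabs_right (x i)) by (apply Rle_ge, Hx; auto).
    apply Rmult_le_compat_l. apply Rabs_pos. apply rsum_ge_term; auto. }
  rewrite <- (Rsqr_pow2 (dot n w x)), <- Rsqr_pow2. rewrite Rsqr_abs.
  apply Rsqr_incr_1; auto. apply Rabs_pos.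
  eapply Rle_trans. apply Rabs_pos. exact H1.
Qed.

Lemma caseB n A w P : copositive n A ->
  (forall u, is_zero_of n A u -> supp n P u -> False) -> Kprop n A w P.
Proof.
  intros HA Hno. pose proof HA as [HS HC].
  destruct (MC.compact_bound n A P) as [c [Hc Hcb]].
  { intros x [H1 [H2 H3]].
    assert (Hnn : nonneg_vec n x) by (intros i Hi; apply H1; auto).
    pose proof (HC x Hnn).
    destruct (Req_dec (quad n A x) 0) as [E|E]; [|lra].
    exfalso. apply (Hno x); [|exact H2].
    split; [exact Hnn|split; [|exact E]].
    apply rsum_nz. rewrite H3. lra. }
  set (W := rsum n (fun i => Rabs (w i))).
  assert (HW : 0 <= W) by (apply rsum_nonneg; intros; apply Rabs_pos).
  exists (c / (W^2 + 1)). split.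
  { apply Rdiv_lt_0_compat; auto. nra. }
  intros x Hx Hs.
  set (s := rsum n x).
  assert (Hs0 : 0 <= s) by (apply rsum_nonneg; auto).
  pose proof (HC x Hx) as Hq.
  pose proof (dot_bound n w x Hx) as Hd. fold W s in Hd.
  assert (Hk : 0 < c / (W^2+1)) by (apply Rdiv_lt_0_compat; auto; nra).
  destruct (Req_dec s 0) as [E|E].
  - rewrite E in Hd. assert ((dot n w x)^2 <= 0) by nra.
    assert (0 <= (dot n w x)^2) by nra. nra.
  - assert (Hsp : 0 < s) by lra.
    assert (HP : Pset n P (fun k => / s * x k)).
    { split; [|split].
      - intros i Hi. split.
        + apply Rmult_le_pos. left; apply Rinv_0_lt_compat; auto. apply Hx; auto.
        + assert (x i <= s) by (apply rsum_ge_term; auto).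
          apply (Rmult_le_reg_l s); auto. rewrite <- Rmult_assoc, Rinv_r by lra. lra.
      - intros i Hi Hpi. rewrite (Hs i Hi Hpi). ring.
      - rewrite rsum_scal. fold s. field. lra. }
    pose proof (Hcb _ HP) as Hc2. rewrite quad_scal in Hc2.
    assert (Hc3 : c * s^2 <= quad n A x).
    { apply (Rmult_le_reg_l ((/ s)^2)). apply pow_lt, Rinv_0_lt_compat; auto.
      replace ((/ s)^2 * (c * s^2)) with c by (field; lra). lra. }
    assert (H4 : c / (W^2+1) * (dot n w x)^2 <= c / (W^2+1) * (W * s)^2)
      by (apply Rmult_le_compat_l; lra).
    assert (H5 : c / (W^2+1) * (W * s)^2 <= c * s^2).
    { replace (c / (W^2+1) * (W * s)^2) with (c * s^2 * (W^2 / (W^2+1))) by (field; nra).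
      assert (W^2 / (W^2+1) <= 1).
      { apply (Rmult_le_reg_l (W^2+1)). nra. field_simplify; nra. }
      assert (0 <= c * s^2) by nra. nra. }
    lra.
Qed.

Lemma Kind n A w : copositive n A -> forall m P, (cnt n P <= m)%nat ->
  (forall u, is_zero_of n A u -> supp n P u -> dot n w u = 0) -> Kprop n A w P.
Proof.
  intros HA. pose proof HA as [HS HC]. induction m; intros P Hc Hz.
  - exists 1. split. lra. intros x Hx Hs.
    assert (Hcz : cnt n P = 0%nat) by lia.
    assert (dot n w x = 0).
    { apply rsum_zero. intros i Hi. rewrite (Hs i Hi (cnt_zero n P Hcz i Hi)). ring. }
    rewrite H. pose proof (HC x Hx). nra.
  - destruct (classic (exists u, is_zero_of n A u /\ supp n P u)) as [[u [Hu Hsu]]|Hno].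
    2: { apply caseB; auto. intros u Hu Hsu. apply Hno. exists u; auto. }
    pose proof (Hz u Hu Hsu) as Hwu.
    destruct Hu as [Hun [Hunz Hqu]].
    destruct (finmin (fun i g => P i = true -> forall x, nonneg_vec n x -> supp n (rm P i) x ->
                 g * (dot n w x)^2 <= quad n A x) n) as [g [Hg Hgi]].
    { intros i Hi. destruct (P i) eqn:Pi.
      - destruct (IHm (rm P i)) as [g [Hg Hgx]].
        + pose proof (cnt_rm n P i).
          replace (Nat.ltb i n) with true in H by (symmetry; apply Nat.ltb_lt; auto).
          rewrite Pi in H. simpl in H. lia.
        + intros u' Hu' Hs'. apply Hz; auto. intros k Hk Pk. apply Hs'; auto.
          unfold rm. rewrite Pk. reflexivity.
        + exists g. split; auto.
      - exists 1. split. lra. intros; discriminate. }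
    { intros i g0 g' Hg' Hle HQ Pi x Hx Hsx. specialize (HQ Pi x Hx Hsx).
      assert (0 <= (dot n w x)^2) by nra. nra. }
    exists g. split; auto. intros y Hy Hsy.
    destruct (argmin n u y) as [i0 [Hi0 [Hui0 Hmin]]].
    { destruct Hunz as [i [Hi Hui]]. exists i. split; auto.
      pose proof (Hun i Hi). lra. }
    set (t := y i0 / u i0).
    assert (Ht : 0 <= t) by (unfold t; apply Rmult_le_pos; [apply Hy; auto|left; apply Rinv_0_lt_compat; auto]).
    set (z := fun k => y k + (- t) * u k).
    assert (Pi0 : P i0 = true).
    { destruct (P i0) eqn:E; auto. rewrite (Hsu i0 Hi0 E) in Hui0. lra. }
    assert (Hz0 : nonneg_vec n z).
    { intros k Hk. unfold z. destruct (Rlt_dec 0 (u k)) as [Hp|Hp].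
      - pose proof (Hmin k Hk Hp) as Hm. fold t in Hm.
        assert (t * u k <= y k).
        { apply (Rmult_le_compat_r (u k)) in Hm; [|lra].
          replace (y k / u k * u k) with (y k) in Hm by (field; lra). lra. }
        lra.
      - assert (u k = 0) by (pose proof (Hun k Hk); lra). rewrite H.
        pose proof (Hy k Hk). lra. }
    assert (Hsz : supp n (rm P i0) z).
    { intros k Hk Hrm. unfold rm in Hrm. unfold z.
      destruct (P k) eqn:Pk.
      - simpl in Hrm. destruct (Nat.eqb k i0) eqn:E; [|discriminate].
        apply Nat.eqb_eq in E. subst k. unfold t. field. lra.
      - rewrite (Hsy k Hk Pk), (Hsu k Hk Pk). ring. }
    pose proof (Hgi i0 Hi0 Pi0 z Hz0 Hsz) as Hgz.
    unfold z in Hgz. rewrite dot_lin, Hwu in Hgz.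
    rewrite quad_expand in Hgz by auto. rewrite Hqu in Hgz.
    assert (0 <= bil n A u y) by (apply bil_zero_nonneg; auto).
    rewrite (bil_sym n A y u HS) in Hgz.
    assert (0 <= t * bil n A u y) by (apply Rmult_le_pos; auto).
    replace (dot n w y + - t * 0) with (dot n w y) in Hgz by ring.
    nra.
Qed.

Lemma cnt_true n : cnt n (fun _ => true) = n.
Proof. induction n; simpl; lia. Qed.

Theorem lemma4p3 (n : nat) (A : nat -> nat -> R) (w : nat -> R) :
  copositive n A -> nonzero_vec n w ->
  (irreducible_wrt n A (outer w) <->
   exists u, is_zero_of n A u /\ dot n w u <> 0).
Proof.
  intros HA Hw. pose proof HA as [HS HC]. split.
  - intros Hirr. apply NNPP; intro Hno. apply Hirr.
    destruct (Kind n A w HA n (fun _ => true)) as [g [Hg Hgx]].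
    + rewrite cnt_true; lia.
    + intros u Hu _. apply NNPP; intro H. apply Hno. exists u; auto.
    + exists g. split; auto. split.
      * intros i j Hi Hj. unfold mat_sub_scal, outer. rewrite (HS i j Hi Hj). ring.
      * intros x Hx. rewrite quad_sub.
        assert (g * (dot n w x)^2 <= quad n A x) by (apply Hgx; auto; intros i _ H; discriminate).
        lra.
  - intros [u [[Hun [Hunz Hq]] Hd]] [g [Hg [_ Hcop]]].
    pose proof (Hcop u Hun) as H. rewrite quad_sub, Hq in H.
    assert (0 < dot n w u * dot n w u) by (apply Rsqr_pos_lt; auto). nra.
Qed.
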